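(* Let $m\ge2$ and let $\mathfrak{h}_m$ be the Lie subalgebra of $\Lambda(\mathbb{Q}\mathrm{Tree}_2^-)$ generated by $\bigcup_{j=2}^m\mathrm{Tree}_2((j))$. Then the subspace $\mathbb{Q}\mathrm{Tree}_2^-((0))\oplus\mathbb{Q}\mathrm{Tree}_2^-((1))\oplus\mathfrak{h}_m$ is a Lie subalgebra of $\Lambda(\mathbb{Q}\mathrm{Tree}_2^-)$.
   Context: $\mathrm{Tree}_2((m))$, $m\ge1$, is the set of planar binary rooted trees with one root and $m$ leaves labeled $1,\dots,m$ from left to right, equivalently full parenthesizations of $12\cdots m$; $\mathrm{Tree}_2((1))=\{1\}$, $\mathrm{Tree}_2((2))=\{(12)\}$. Composition $S\circ_iT$ grafts the root of $T$ onto the $i$-th leaf of $S$. For $c\in\mathrm{Tree}_2((m))$, $m\ge2$, $\partial_ic\in\mathrm{Tree}_2((m-1))$ is obtained by erasing the $i$-th leaf (suppressing the resulting one-input vertex). The operad $\mathrm{Tree}_2^-$ has $\mathrm{Tree}_2^-((0))=\{\circ\}$, $\mathrm{Tree}_2^-((m))=\mathrm{Tree}_2((m))$ for $m\ge1$, grafting compositions, and $c\circ_i\circ=\partial_ic$, $1\circ_1\circ=\circ$. $\Lambda(\mathbb{Q}\mathrm{Tree}_2^-)=\bigoplus_{m\ge0}\mathbb{Q}\mathrm{Tree}_2^-((m))$ with Lie bracket $[c,d]=\sum_{t=1}^{j}d\circ_tc-\sum_{s=1}^{k}c\circ_sd$ for $c$ of arity $k$, $d$ of arity $j$. *)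

(* Defs.v *)
(* The vector space Lambda(Q Tree_2^-) is modelled as the
   free Q-vector space {malg rat[T2m]} (finitely supported functions
   T2m -> rat, from multinomials' monalg) on the set T2m of basis elements. *)
From HB Require Import structures.
From mathcomp Require Import all_boot all_algebra.
From mathcomp Require Import finmap.
From mathcomp.multinomials Require Import monalg.

Set Implicit Arguments.
Unset Strict Implicit.
Unset Printing Implicit Defensive.

Import GRing.Theory.
Local Open Scope ring_scope.

(* Planar binary rooted trees (leaves are numbered 1..m left to right). *)
Inductive tree : Type := Leaf | Node of tree & tree.

Fixpoint tree_enc (t : tree) : GenTree.tree unit :=
  match t with
  | Leaf => GenTree.Leaf tt
  | Node a b => GenTree.Node 0 [:: tree_enc a; tree_enc b]
  end.

Fixpoint tree_dec (g : GenTree.tree unit) : tree :=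
  match g with
  | GenTree.Node _ (a :: b :: _) => Node (tree_dec a) (tree_dec b)
  | _ => Leaf
  end.

Lemma tree_encK : cancel tree_enc tree_dec.
Proof. by elim=> //= a -> b ->. Qed.

HB.instance Definition _ := Countable.copy tree (can_type tree_encK).

Fixpoint leaves (t : tree) : nat :=
  match t with Leaf => 1%N | Node a b => (leaves a + leaves b)%N end.

(* S o_i T : graft the root of T onto the i-th leaf of S (1-based) *)
Fixpoint graft (Sx : tree) (i : nat) (T : tree) : tree :=
  match Sx with
  | Leaf => if i == 1%N then T else Leaf
  | Node a b =>
      if (i <= leaves a)%N then Node (graft a i T) b
      else Node a (graft b (i - leaves a) T)
  end.

(* partial_i c : erase the i-th leaf and suppress the one-input vertex *)
Fixpoint erase (c : tree) (i : nat) : tree :=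
  match c with
  | Leaf => Leaf
  | Node a b =>
      if (i <= leaves a)%N then
        (if a is Leaf then b else Node (erase a i) b)
      else
        (if b is Leaf then a else Node a (erase b (i - leaves a)))
  end.

(* Tree_2^- : None is the arity-0 element "o", Some t is the tree t *)
Definition T2m := option tree.

Definition ar (x : T2m) : nat :=
  match x with None => 0%N | Some t => leaves t end.

(* operadic composition x o_i y in Tree_2^- (only used for 1 <= i <= ar x) *)
Definition comp (x : T2m) (i : nat) (y : T2m) : T2m :=
  match x, y with
  | Some Sx, Some Tx => Some (graft Sx i Tx)
  | Some c, None => if leaves c == 1%N then None else Some (erase c i)
  | None, _ => None
  end.

Definition LQ := {malg rat[T2m]}.

Definition bv (x : T2m) : LQ := << x >>.

Definition brb (c d : T2m) : LQ :=
  \sum_(1 <= t < (ar d).+1) bv (comp d t c)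
  - \sum_(1 <= s < (ar c).+1) bv (comp c s d).

Definition bracket (f g : LQ) : LQ :=
  \sum_(c <- msupp f) \sum_(d <- msupp g) (f@_c * g@_d) *: brb c d.

Definition lie_subalgebra (P : LQ -> Prop) : Prop :=
  [/\ P 0,
      (forall x y, P x -> P y -> P (x + y)),
      (forall (a : rat) x, P x -> P (a *: x)) &
      (forall x y, P x -> P y -> P (bracket x y))].

Definition lie_generated (S : LQ -> Prop) (x : LQ) : Prop :=
  forall P, lie_subalgebra P -> (forall y, S y -> P y) -> P x.

Definition h_gen (m : nat) : LQ -> Prop :=
  lie_generated (fun y => exists t : tree,
                   (2 <= leaves t <= m)%N /\ y = bv (Some t)).

(* Main.v *)
Require Import Defs.
From HB Require Import structures.
From mathcomp Require Import all_boot all_algebra.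
From mathcomp Require Import finmap.
From mathcomp.multinomials Require Import monalg.
From mathcomp Require Import zify ring.
Import GRing.Theory.
Local Open Scope ring_scope.

Lemma leaves_gt0 t : (0 < leaves t)%N.
Proof. by elim: t => //= a Ha b Hb; rewrite addn_gt0 Ha. Qed.

Lemma leaves1 t : leaves t = 1%N -> t = Leaf.
Proof. case: t => //= a b; have := leaves_gt0 a; have := leaves_gt0 b; lia. Qed.

Lemma leaves_graft D t C : (1 <= t <= leaves D)%N ->
  leaves (graft D t C) = (leaves D + leaves C - 1)%N.
Proof.
elim: D t => [|a Ha b Hb] t /=.
  move=> Ht; have -> : t = 1%N. 
    by apply/eqP; rewrite eqn_leq; case/andP: Ht => -> ->.
  by rewrite /= addKn.
move=> Ht; have := leaves_gt0 a; have := leaves_gt0 b; have := leaves_gt0 C.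
case: ifP => Hta /=.
  by rewrite Ha; lia.
by rewrite Hb; lia.
Qed.

Lemma graft_Leaf D t : graft D t Leaf = D.
Proof.
elim: D t => [|a Ha b Hb] t /=; first by case: ifP.
by case: ifP; rewrite ?Ha ?Hb.
Qed.

Lemma graft_l a b i C : (i <= leaves a)%N -> graft (Node a b) i C = Node (graft a i C) b.
Proof. by move=> /= ->. Qed.
Lemma graft_r a b i C : (leaves a < i)%N ->
  graft (Node a b) i C = Node a (graft b (i - leaves a) C).
Proof. by move=> /= H; case: ifP => // H'; exfalso; lia. Qed.
Lemma erase_l a b i : (i <= leaves a)%N -> (1 < leaves a)%N ->
  erase (Node a b) i = Node (erase a i) b.
Proof. by case: a => // a1 a2 /= ->. Qed.
Lemma erase_r a b i : (leaves a < i)%N -> (1 < leaves b)%N ->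
  erase (Node a b) i = Node a (erase b (i - leaves a)).
Proof. by case: b => // b1 b2 /= H _; case: ifP => // H'; exfalso; lia. Qed.
Lemma erase_lL b i : (i <= 1)%N -> erase (Node Leaf b) i = b.
Proof. by move=> /= ->. Qed.
Lemma erase_rL a i : (leaves a < i)%N -> erase (Node a Leaf) i = a.
Proof. by move=> /= H; case: ifP => // H'; exfalso; lia. Qed.

Lemma leaves_erase c i : (1 < leaves c)%N -> leaves (erase c i) = (leaves c - 1)%N.
Proof.
elim: c i => [|a Ha b Hb] i //= _.
have := leaves_gt0 a; have := leaves_gt0 b.
case: ifP => Hi.
  case: a Ha Hi => [|a1 a2] Ha Hi /=; first lia.
  rewrite Ha /=; first lia.
  by have := leaves_gt0 a1; have := leaves_gt0 a2; lia.
case: b Hb => [|b1 b2] Hb /=; first lia.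
rewrite Hb /=; first lia.
by have := leaves_gt0 b1; have := leaves_gt0 b2; lia.
Qed.

Lemma leaves_Leaf t : (leaves t <= 1)%N -> t = Leaf.
Proof. by move=> H; apply: leaves1; have := leaves_gt0 t; lia. Qed.

Lemma T3 D t C v : (1 < leaves C)%N -> (1 <= t <= leaves D)%N -> (1 <= v <= leaves C)%N ->
  erase (graft D t C) (t + v - 1) = graft D t (erase C v).
Proof.
elim: D t => [|a Ha b Hb] t HC Ht Hv.
  have Et : t = 1%N by move: Ht => /= ; lia.
  by subst t; rewrite /= add1n subn1.
have := leaves_gt0 a; have := leaves_gt0 b; have := leaves_gt0 C => Pc Pb Pa.
rewrite /= in Ht.
have [Hta|Hta] := leqP t (leaves a).
  have Lg : leaves (graft a t C) = (leaves a + leaves C - 1)%N by apply: leaves_graft; lia.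
  rewrite !graft_l // erase_l; first by rewrite Ha //; lia.
    by rewrite Lg; lia.
  by rewrite Lg; lia.
have Lg : leaves (graft b (t - leaves a) C) = (leaves b + leaves C - 1)%N by apply: leaves_graft; lia.
rewrite !graft_r // erase_r; last by rewrite Lg; lia.
  by rewrite -Hb; try lia; congr (Node a (erase _ _)); lia.
lia.
Qed.

Lemma T4 D t C u : (1 <= u)%N -> (u < t)%N -> (t <= leaves D)%N ->
  erase (graft D t C) u = graft (erase D u) (t - 1) C.
Proof.
elim: D t u => [|a Ha b Hb] t u Hu Hut HtD; first by move: HtD => /=; lia.
have := leaves_gt0 a; have := leaves_gt0 b; have := leaves_gt0 C => Pc Pb Pa.
rewrite /= in HtD.
have [Hta|Hta] := leqP t (leaves a).
  have Lg : leaves (graft a t C) = (leaves a + leaves C - 1)%N by apply: leaves_graft; lia.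
  have Le : leaves (erase a u) = (leaves a - 1)%N by apply: leaves_erase; lia.
  rewrite graft_l // erase_l; [|lia|rewrite Lg; lia].
  rewrite erase_l; [|lia|lia].
  by rewrite graft_l ?Le; [rewrite Ha //|lia].
have Lg : leaves (graft b (t - leaves a) C) = (leaves b + leaves C - 1)%N
  by apply: leaves_graft; lia.
rewrite graft_r //.
have [Hua|Hua] := leqP u (leaves a).
  have [La1|La1] := leqP (leaves a) 1.
    have Ea := leaves_Leaf a La1; subst a.
    by rewrite !erase_lL //= subn1.
  have Le : leaves (erase a u) = (leaves a - 1)%N by apply: leaves_erase.
  rewrite (erase_l a _ u Hua La1) (erase_l a b u Hua La1).
  rewrite graft_r; last by rewrite Le; lia.
  by rewrite Le; congr (Node _ (graft b _ C)); lia.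
have Le : leaves (erase b (u - leaves a)) = (leaves b - 1)%N by apply: leaves_erase; lia.
rewrite !erase_r; [|lia|lia|lia|rewrite Lg; lia].
rewrite graft_r; last lia.
rewrite Hb; [|lia|lia|lia].
by congr (Node a (graft _ _ C)); lia.
Qed.

Lemma T5 D t C u : (1 <= t)%N -> (t < u)%N -> (u <= leaves D)%N ->
  erase (graft D t C) (u + leaves C - 1) = graft (erase D u) t C.
Proof.
elim: D t u => [|a Ha b Hb] t u Ht Htu HuD; first by move: HuD => /=; lia.
have := leaves_gt0 a; have := leaves_gt0 b; have := leaves_gt0 C => Pc Pb Pa.
rewrite /= in HuD.
have [Hta|Hta] := leqP t (leaves a).
  have Lg : leaves (graft a t C) = (leaves a + leaves C - 1)%N by apply: leaves_graft; lia.
  rewrite graft_l //.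
  have [Hua|Hua] := leqP u (leaves a).
    have Le : leaves (erase a u) = (leaves a - 1)%N by apply: leaves_erase; lia.
    rewrite !erase_l; [|lia|lia|rewrite Lg; lia|rewrite Lg; lia].
    by rewrite graft_l ?Le; [rewrite Ha //|lia].
  have [Lb1|Lb1] := leqP (leaves b) 1.
    have Eb := leaves_Leaf b Lb1; subst b.
    rewrite (erase_rL a u) // erase_rL //; rewrite Lg; lia.
  rewrite (erase_r (graft a t C) b); [|rewrite Lg; lia|done].
  rewrite (erase_r a b) // graft_l //; congr (Node _ (erase _ _)); rewrite Lg; lia.
have Lg : leaves (graft b (t - leaves a) C) = (leaves b + leaves C - 1)%N
  by apply: leaves_graft; lia.
have Le : leaves (erase b (u - leaves a)) = (leaves b - 1)%N by apply: leaves_erase; lia.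
rewrite graft_r // !erase_r; [|lia|lia|lia|rewrite Lg; lia].
rewrite graft_r; last lia.
have -> : (u + leaves C - 1 - leaves a = (u - leaves a) + leaves C - 1)%N by lia.
by rewrite Hb; [|lia|lia|lia].
Qed.

Definition Lin (F : T2m -> LQ) (f : LQ) : LQ := \sum_(c <- msupp f) f@_c *: F c.

Lemma LinEw F f (d : {fset T2m}) : (msupp f `<=` d)%fset ->
  Lin F f = \sum_(c <- d) f@_c *: F c.
Proof.
move=> le; rewrite /Lin (big_fset_incl _ le) //= => x _ /mcoeff_outdom ->.
by rewrite scale0r.
Qed.

Lemma LinD F f g : Lin F (f + g) = Lin F f + Lin F g.
Proof.
pose d := (msupp f `|` msupp g)%fset.
rewrite (@LinEw F (f + g) d (msuppD_le _ _)) (@LinEw F f d (fsubsetUl _ _))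
        (@LinEw F g d (fsubsetUr _ _)) -big_split /=.
by apply: eq_bigr => c _; rewrite mcoeffD scalerDl.
Qed.

Lemma LinZ F a f : Lin F (a *: f) = a *: Lin F f.
Proof.
rewrite (@LinEw F (a *: f) _ (msuppZ_le _ _)) /Lin scaler_sumr.
by apply: eq_bigr => c _; rewrite mcoeffZ scalerA.
Qed.

Lemma Lin0 F : Lin F 0 = 0.
Proof. have := LinZ F 0 0; rewrite !scale0r; exact. Qed.

Lemma bvE c : bv c = << (1 : rat) *g c >>. Proof. by []. Qed.

Lemma Lin_bv F c : Lin F (bv c) = F c.
Proof.
by rewrite /Lin /bv msuppU oner_eq0 big_seq_fset1 mcoeffUU scale1r.
Qed.

Lemma LinFD F G f : Lin (fun c => F c + G c) f = Lin F f + Lin G f.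
Proof. by rewrite /Lin -big_split; apply: eq_bigr => c _; rewrite scalerDr. Qed.

Lemma LinFZ F a f : Lin (fun c => a *: F c) f = a *: Lin F f.
Proof.
rewrite /Lin scaler_sumr; apply: eq_bigr => c _.
by rewrite !scalerA mulrC.
Qed.

Lemma LinFN F f : Lin (fun c => - F c) f = - Lin F f.
Proof.
rewrite -scaleN1r -LinFZ /Lin; apply: eq_bigr => c _.
by rewrite scaleN1r.
Qed.

Lemma LinFext F G f : (forall c, F c = G c) -> Lin F f = Lin G f.
Proof. by move=> H; rewrite /Lin; apply: eq_bigr => c _; rewrite H. Qed.

Lemma scale_bv a c : a *: bv c = << a *g c >>.
Proof.
apply/malgP => k; rewrite mcoeffZ /bv !mcoeffU.
by case: eqP => _; rewrite ?mulr1n ?mulr0n ?mulr1 ?mulr0.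
Qed.

Lemma LinE f : Lin bv f = f.
Proof.
rewrite [RHS]monalgE /Lin; apply: eq_bigr => c _; exact: scale_bv.
Qed.

Lemma Lin_morph (phi : LQ -> LQ) F f :
  phi 0 = 0 -> (forall x y, phi (x + y) = phi x + phi y) ->
  (forall a x, phi (a *: x) = a *: phi x) ->
  phi (Lin F f) = Lin (fun c => phi (F c)) f.
Proof.
move=> p0 pD pZ; rewrite /Lin (big_morph phi pD p0).
by apply: eq_bigr => c _; rewrite pZ.
Qed.

Lemma morph_sum (phi : LQ -> LQ) (I : Type) (r : seq I) (P : pred I) (G : I -> LQ) :
  phi 0 = 0 -> (forall x y, phi (x + y) = phi x + phi y) ->
  phi (\sum_(i <- r | P i) G i) = \sum_(i <- r | P i) phi (G i).
Proof. by move=> p0 pD; rewrite (big_morph phi pD p0). Qed.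

Lemma bracketE f g : bracket f g = Lin (fun c => Lin (brb c) g) f.
Proof.
rewrite /bracket /Lin; apply: eq_bigr => c _; rewrite scaler_sumr.
by apply: eq_bigr => d _; rewrite scalerA.
Qed.

Lemma brD1 f f' g : bracket (f + f') g = bracket f g + bracket f' g.
Proof. by rewrite !bracketE LinD. Qed.
Lemma brZ1 a f g : bracket (a *: f) g = a *: bracket f g.
Proof. by rewrite !bracketE LinZ. Qed.
Lemma br01 g : bracket 0 g = 0.
Proof. by rewrite bracketE Lin0. Qed.
Lemma brD2 f g g' : bracket f (g + g') = bracket f g + bracket f g'.
Proof.
rewrite !bracketE -LinFD; apply: LinFext => c; exact: LinD.
Qed.
Lemma brZ2 a f g : bracket f (a *: g) = a *: bracket f g.
Proof.
rewrite !bracketE -LinFZ; apply: LinFext => c; exact: LinZ.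
Qed.
Lemma br02 f : bracket f 0 = 0.
Proof. have := brZ2 0 f 0; rewrite !scale0r; exact. Qed.
Lemma br_bv c d : bracket (bv c) (bv d) = brb c d.
Proof. by rewrite bracketE !Lin_bv. Qed.
Lemma br_bv1 c g : bracket (bv c) g = Lin (brb c) g.
Proof. by rewrite bracketE Lin_bv. Qed.
Lemma br_bv2 f d : bracket f (bv d) = Lin (fun c => brb c d) f.
Proof. by rewrite bracketE; apply: LinFext => c; rewrite Lin_bv. Qed.
Lemma brN1 f g : bracket (- f) g = - bracket f g.
Proof. by rewrite -scaleN1r brZ1 scaleN1r. Qed.
Lemma brN2 f g : bracket f (- g) = - bracket f g.
Proof. by rewrite -scaleN1r brZ2 scaleN1r. Qed.
Lemma brsum1 (I : Type) (r : seq I) (P : pred I) (G : I -> LQ) g :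
  bracket (\sum_(i <- r | P i) G i) g = \sum_(i <- r | P i) bracket (G i) g.
Proof. by apply: (morph_sum (fun x => bracket x g)); [exact: br01|move=> x y; exact: brD1]. Qed.
Lemma brsum2 (I : Type) (r : seq I) (P : pred I) (G : I -> LQ) f :
  bracket f (\sum_(i <- r | P i) G i) = \sum_(i <- r | P i) bracket f (G i).
Proof. by apply: (morph_sum (bracket f)); [exact: br02|move=> x y; exact: brD2]. Qed.

Lemma brb_anti c d : brb d c = - brb c d.
Proof. by rewrite /brb opprB. Qed.

Lemma br_anti f g : bracket g f = - bracket f g.
Proof.
rewrite /bracket exchange_big /= -sumrN; apply: eq_bigr => d _.
rewrite -sumrN; apply: eq_bigr => c _.
by rewrite brb_anti scalerN mulrC.
Qed.

Lemma derivation (delta : LQ -> LQ) :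
  delta 0 = 0 -> (forall x y, delta (x + y) = delta x + delta y) ->
  (forall a x, delta (a *: x) = a *: delta x) ->
  (forall c d, delta (brb c d) = bracket (delta (bv c)) (bv d) + bracket (bv c) (delta (bv d))) ->
  forall f g, delta (bracket f g) = bracket (delta f) g + bracket f (delta g).
Proof.
move=> p0 pD pZ H f g.
have LM := fun F h => @Lin_morph delta F h p0 pD pZ.
have B1 : forall y F h, bracket (Lin F h) y = Lin (fun c => bracket (F c) y) h.
  move=> y F h; apply: (@Lin_morph (fun x => bracket x y)).
  - exact: br01.
  - by move=> x z; exact: brD1.
  - by move=> a x; exact: brZ1.
have B2 : forall y F h, bracket y (Lin F h) = Lin (fun c => bracket y (F c)) h.
  move=> y F h; apply: (@Lin_morph (bracket y)).
  - exact: br02.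
  - by move=> x z; exact: brD2.
  - by move=> a x; exact: brZ2.
rewrite bracketE LM.
rewrite -{2}(LinE f) LM B1.
rewrite -{3}(LinE f) B1.
rewrite -LinFD; apply: LinFext => c.
have E1 : bracket (delta (bv c)) g = Lin (fun d => bracket (delta (bv c)) (bv d)) g
  by rewrite -B2 LinE.
have E2 : bracket (bv c) (delta g) = Lin (fun d => bracket (bv c) (delta (bv d))) g
  by rewrite -B2 -LM LinE.
rewrite (LM (brb c) g) E1 E2 -LinFD; apply: LinFext => d.
exact: H.
Qed.

Lemma sum_shift (F : nat -> LQ) m n m' n' a : m' = (m + a)%N -> n' = (n + a)%N ->
  \sum_(m' <= i < n') F i = \sum_(m <= i < n) F (i + a)%N.
Proof. by move=> -> ->; rewrite big_addn addnK. Qed.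

Definition star c d := \sum_(1 <= t < (ar d).+1) bv (Defs.comp d t c).
Definition dsum e := \sum_(1 <= u < (ar e).+1) bv (Defs.comp e u None).
Definition G D C t u := bv (Some (graft (erase D u) (if (u < t)%N then (t-1)%N else t) C)).

Lemma pert D C t : (1 <= t <= leaves D)%N ->
  dsum (Some (graft D t C)) =
  \sum_(1 <= v < (leaves C).+1) bv (Defs.comp (Some D) t (Defs.comp (Some C) v None)) +
  \sum_(1 <= u < (leaves D).+1) (if u == t then 0 else G D C t u).
Proof.
move=> Ht.
have Pc := leaves_gt0 C.
have Lg : leaves (graft D t C) = (leaves D + leaves C - 1)%N by apply: leaves_graft.
rewrite /dsum /= Lg.
rewrite (@big_cat_nat _ _ _ t) /=; [|lia|lia].
rewrite (@big_cat_nat _ _ _ (t + leaves C)%N _ (leaves D + leaves C - 1).+1) /=; [|lia|lia].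
rewrite [X in _ = _ + X](@big_cat_nat _ _ _ t) /=; [|lia|lia].
rewrite [X in _ = _ + (_ + X)](@big_cat_nat _ _ _ t.+1) /=; [|lia|lia].
rewrite big_nat1 eqxx add0r.
rewrite (@sum_shift _ 1 (leaves C).+1 t (t + leaves C) (t - 1)); [|lia|lia].
rewrite (@sum_shift _ t.+1 (leaves D).+1 (t + leaves C) (leaves D + leaves C - 1).+1 (leaves C - 1));
  [|lia|lia].
rewrite addrA [X in X + _ = _]addrC -addrA; congr (_ + _).
  apply: eq_big_nat => v Hv.
  have [LC|LC] := leqP (leaves C) 1.
    have EC := leaves_Leaf C LC; subst C.
    have -> : v = 1%N by move: Hv => /=; lia.
    by rewrite graft_Leaf /= addnK (_ : (1 + (t - 1))%N = t) //; lia.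
  have NC : leaves C == 1%N = false by apply/eqP; lia.
  have NG : ((leaves D + leaves C - 1)%N == 1)%N = false by apply/eqP; lia.
  rewrite /Defs.comp NG NC; congr (bv (Some _)).
  by rewrite -T3; first (congr erase; lia); lia.
congr (_ + _).
  apply: eq_big_nat => u Hu.
  have NG : ((leaves D + leaves C - 1)%N == 1)%N = false by apply/eqP; lia.
  have -> : (u == t) = false by apply/eqP; lia.
  rewrite /G NG ifT; last lia.
  by congr (bv (Some _)); apply: T4; lia.
apply: eq_big_nat => u Hu.
have NG : ((leaves D + leaves C - 1)%N == 1)%N = false by apply/eqP; lia.
have -> : (u == t) = false by apply/eqP; lia.
rewrite /G NG ifF; last lia.
congr (bv (Some _)).
by rewrite -T5; first (congr erase; lia); lia.
Qed.

Lemma peru D C u : (1 <= u <= leaves D)%N ->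
  \sum_(1 <= t < (leaves D).+1) (if u == t then 0 else G D C t u) =
  star (Some C) (Defs.comp (Some D) u None).
Proof.
move=> Hu.
have [LD|LD] := leqP (leaves D) 1.
  have ED := leaves_Leaf D LD; subst D.
  have Eu : u = 1%N by move: Hu => /=; lia.
  subst u; rewrite /= big_nat1 eqxx /star /= big_geq //.
have Le : leaves (erase D u) = (leaves D - 1)%N by apply: leaves_erase.
have ND : (leaves D == 1%N) = false by apply/eqP; lia.
rewrite /star /Defs.comp ND /= Le.
rewrite (@big_cat_nat _ _ _ u) /=; [|lia|lia].
rewrite (@big_cat_nat _ _ _ u.+1 u) /=; [|lia|lia].
rewrite big_nat1 eqxx add0r.
rewrite [RHS](@big_cat_nat _ _ _ u) /=; [|lia|lia].
rewrite (@sum_shift _ u (leaves D - 1).+1 u.+1 (leaves D).+1 1); [|lia|lia].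
congr (_ + _); apply: eq_big_nat => t Ht.
  by rewrite /G ifF; [rewrite ifF //|]; apply/negbTE; rewrite ?neq_ltn; lia.
rewrite /G ifF; last by apply/eqP; lia.
rewrite ifT; last lia.
by rewrite addn1 subn1.
Qed.

Lemma Lkey c d :
  \sum_(1 <= t < (ar d).+1) dsum (Defs.comp d t c) =
  \sum_(1 <= u < (ar c).+1) star (Defs.comp c u None) d +
  \sum_(1 <= u < (ar d).+1) star c (Defs.comp d u None).
Proof.
case: d => [D|]; last first.
  rewrite [LHS]big_geq // [X in _ = _ + X]big_geq // addr0 big1 // => u _.
  by rewrite /star big_geq.
case: c => [C|]; last by rewrite [X in _ = X + _]big_geq // add0r.
rewrite [in LHS]/=.
under eq_big_nat => t Ht do rewrite pert //.
rewrite big_split /=.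
congr (_ + _).
  rewrite exchange_big /=; apply: eq_bigr => v _; rewrite /star /=.
  done.
rewrite exchange_big /=; apply: eq_big_nat => u Hu.
exact: peru.
Qed.

Lemma AR c d t : (1 <= t < (ar d).+1)%N -> (ar (Defs.comp d t c)).+1 = (ar c + ar d)%N.
Proof.
case: d => [D|] /=; last by lia.
move=> Ht.
case: c => [C|] /=.
  by rewrite leaves_graft; have := leaves_gt0 C; lia.
case: eqP => HD /=; first lia.
by rewrite leaves_erase; have := leaves_gt0 D; lia.
Qed.

Lemma ARq c d t : (1 <= t < (ar d).+1)%N ->
  ((ar (Defs.comp d t c))%:R : rat) - 1 = (ar c)%:R + (ar d)%:R - 2.
Proof.
move/(AR c) => H.
have E : ((ar (Defs.comp d t c))%:R : rat) = (ar c)%:R + (ar d)%:R - 1.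
  by rewrite -natrD -H -addn1 natrD addrK.
rewrite E; ring.
Qed.

Lemma br1_bv e : bracket (bv (Some Leaf)) (bv e) = ((ar e)%:R - 1) *: bv e.
Proof.
rewrite br_bv /brb big_nat1 /=.
case: e => [E|] /=.
  under eq_big_nat => t Ht do rewrite graft_Leaf.
  by rewrite sumr_const_nat subn1 /= -scaler_nat scalerBl scale1r.
by rewrite big_geq // scalerBl scale1r (_ : (0%:R : rat) = 0) // scale0r.
Qed.

Lemma D1 c d : bracket (bv (Some Leaf)) (brb c d) =
  bracket (bracket (bv (Some Leaf)) (bv c)) (bv d) +
  bracket (bv c) (bracket (bv (Some Leaf)) (bv d)).
Proof.
rewrite !br1_bv brZ1 brZ2 !br_bv -scalerDl.
rewrite /brb brD2 brN2 !brsum2.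
under eq_big_nat => t Ht do rewrite br1_bv (ARq c d t Ht).
under [X in _ - X = _]eq_big_nat => t Ht do rewrite br1_bv (ARq d c t Ht).
have -> : (ar d)%:R + (ar c)%:R - 2 = (ar c)%:R + (ar d)%:R - 2 :> rat by ring.
rewrite -!scaler_sumr -scalerBr; congr (_ *: _); ring.
Qed.

Lemma br0_bv e : bracket (bv None) (bv e) = dsum e.
Proof. by rewrite br_bv /brb [X in _ - X]big_geq // subr0. Qed.

Lemma dsum_bv e : dsum e = bracket (bv None) (bv e).
Proof. by rewrite br0_bv. Qed.

Lemma rearr (V : zmodType) (a b c d : V) : a + b - (c + d) = (a - d) + (b - c).
Proof. by rewrite opprD [- c - d]addrC addrACA. Qed.

Lemma D0 c d : bracket (bv None) (brb c d) =
  bracket (bracket (bv None) (bv c)) (bv d) +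
  bracket (bv c) (bracket (bv None) (bv d)).
Proof.
rewrite !br0_bv.
have E1 : bracket (bv None) (brb c d) =
    \sum_(1 <= t < (ar d).+1) dsum (Defs.comp d t c) -
    \sum_(1 <= t < (ar c).+1) dsum (Defs.comp c t d).
  rewrite /brb brD2 brN2 !brsum2.
  by congr (_ - _); apply: eq_bigr => t _; rewrite br0_bv.
have E2 : bracket (dsum c) (bv d) =
    \sum_(1 <= u < (ar c).+1) star (Defs.comp c u None) d -
    \sum_(1 <= u < (ar c).+1) star d (Defs.comp c u None).
  by rewrite /dsum brsum1 -sumrB; apply: eq_bigr => u _; rewrite br_bv.
have E3 : bracket (bv c) (dsum d) =
    \sum_(1 <= u < (ar d).+1) star c (Defs.comp d u None) -
    \sum_(1 <= u < (ar d).+1) star (Defs.comp d u None) c.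
  by rewrite /dsum brsum2 -sumrB; apply: eq_bigr => u _; rewrite br_bv.
by rewrite E1 E2 E3 !Lkey rearr.
Qed.

Lemma Der1 f g : bracket (bv (Some Leaf)) (bracket f g) =
  bracket (bracket (bv (Some Leaf)) f) g + bracket f (bracket (bv (Some Leaf)) g).
Proof.
apply: derivation; [exact: br02|move=> x y; exact: brD2|move=> a x; exact: brZ2|exact: D1].
Qed.

Lemma Der0 f g : bracket (bv None) (bracket f g) =
  bracket (bracket (bv None) f) g + bracket f (bracket (bv None) g).
Proof.
apply: derivation; [exact: br02|move=> x y; exact: brD2|move=> a x; exact: brZ2|exact: D0].
Qed.

Lemma gen_sub S : lie_subalgebra (lie_generated S).
Proof.
split.
- by move=> P [].
- by move=> x y Hx Hy P HP HS; case: (HP) => _ Hadd _ _; apply: Hadd; [apply: Hx|apply: Hy].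
- by move=> a x Hx P HP HS; case: (HP) => _ _ Hsc _; apply: Hsc; apply: Hx.
- by move=> x y Hx Hy P HP HS; case: (HP) => _ _ _ Hbr; apply: Hbr; [apply: Hx|apply: Hy].
Qed.

Lemma rearr3 (W : zmodType) (x y z x' y' z' : W) :
  (x + x') + (y + y') + (z + z') = (x + y + z) + (x' + y' + z').
Proof. by rewrite [RHS]addrACA (addrACA x). Qed.

Lemma gen_gen (S : LQ -> Prop) y : S y -> lie_generated S y.
Proof. by move=> Sy P _ HS; apply: HS. Qed.

Section Main.
Variable m : nat.
Let H := h_gen m.
Let V := fun x : LQ => exists (a b : rat) (h : LQ),
      h_gen m h /\ x = a *: bv None + b *: bv (Some Leaf) + h.

Lemma HS : lie_subalgebra H. Proof. exact: gen_sub. Qed.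
Lemma H0 : H 0. Proof. by case: HS. Qed.
Lemma HD x y : H x -> H y -> H (x + y). Proof. by case: HS => _ P _ _; apply: P. Qed.
Lemma HZ a x : H x -> H (a *: x). Proof. by case: HS => _ _ P _; apply: P. Qed.
Lemma HB x y : H x -> H y -> H (bracket x y). Proof. by case: HS => _ _ _ P; apply: P. Qed.

Lemma VH x : H x -> V x.
Proof. by move=> Hx; exists 0, 0, x; rewrite !scale0r !add0r. Qed.
Lemma V0 : V 0. Proof. exact: VH H0. Qed.
Lemma Vo : V (bv None).
Proof. by exists 1, 0, 0; split; [exact: H0|rewrite scale1r scale0r !addr0]. Qed.
Lemma V1 : V (bv (Some Leaf)).
Proof. by exists 0, 1, 0; split; [exact: H0|rewrite scale1r scale0r add0r addr0]. Qed.
Lemma VD x y : V x -> V y -> V (x + y).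
Proof.
move=> [a [b [h [Hh ->]]]] [a' [b' [h' [Hh' ->]]]].
exists (a + a'), (b + b'), (h + h'); split; first exact: HD.
by rewrite !scalerDl rearr3.
Qed.
Lemma VZ a x : V x -> V (a *: x).
Proof.
move=> [a1 [b [h [Hh ->]]]]; exists (a * a1), (a * b), (a *: h); split; first exact: HZ.
by rewrite !scalerDr !scalerA.
Qed.
Lemma VN x : V x -> V (- x).
Proof. by move=> Hx; rewrite -scaleN1r; apply: VZ. Qed.
Lemma Vsum (I : Type) (r : seq I) (F : I -> LQ) :
  (forall i, V (F i)) -> V (\sum_(i <- r) F i).
Proof. by move=> HF; elim/big_ind: _ => //; [exact: V0|exact: VD]. Qed.

Lemma key h : H h -> H (bracket (bv (Some Leaf)) h) /\ V (bracket (bv None) h).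
Proof.
move=> Hh.
suff : H h /\ H (bracket (bv (Some Leaf)) h) /\ V (bracket (bv None) h) by case.
apply: (Hh (fun x => H x /\ H (bracket (bv (Some Leaf)) x) /\ V (bracket (bv None) x))).
  split.
- split; first exact: H0.
  by rewrite !br02; split; [exact: H0|exact: V0].
- move=> x y [Hx [H1x Vx]] [Hy [H1y Vy]]; split; first exact: HD.
  by rewrite !brD2; split; [exact: HD|exact: VD].
- move=> a x [Hx [H1x Vx]]; split; first exact: HZ.
  by rewrite !brZ2; split; [exact: HZ|exact: VZ].
- move=> x y [Hx [H1x Vx]] [Hy [H1y Vy]]; split; first exact: HB.
  rewrite Der1 Der0; split; first by apply: HD; apply: HB.
  apply: VD.
    case: Vx => a [b [h' [Hh' ->]]].
    rewrite !brD1 !brZ1; apply: VD; last by apply: VH; apply: HB.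
    by apply: VD; apply: VZ => //; apply: VH.
  case: Vy => a [b [h' [Hh' ->]]].
  rewrite !brD2 !brZ2; apply: VD; last by apply: VH; apply: HB.
  apply: VD; apply: VZ; rewrite br_anti; first by apply: VN.
  by apply: VH; rewrite -scaleN1r; apply: HZ.
- move=> y [t [Ht ->]]; split.
    by apply: gen_gen; exists t.
  split.
    by rewrite br1_bv; apply: HZ; apply: gen_gen; exists t.
  rewrite br0_bv /dsum /=.
  have NT : (leaves t == 1%N) = false by apply/eqP; lia.
  apply: Vsum => u; rewrite NT.
  have Le : leaves (erase t u) = (leaves t - 1)%N by apply: leaves_erase; lia.
  have [L1|L1] := leqP (leaves (erase t u)) 1.
    by rewrite (leaves_Leaf _ L1); exact: V1.
  by apply: VH; apply: gen_gen; exists (erase t u); split => //; lia.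
Qed.

Lemma Vo_br y : V y -> V (bracket (bv None) y).
Proof.
case=> a [b [h [Hh ->]]].
rewrite !brD2 !brZ2; apply: VD; last by case: (key _ Hh).
apply: VD; apply: VZ.
  by rewrite br0_bv /dsum big_geq //; exact: V0.
by rewrite br0_bv /dsum /= big_nat1 /=; exact: Vo.
Qed.

Lemma V1_br y : V y -> V (bracket (bv (Some Leaf)) y).
Proof.
case=> a [b [h [Hh ->]]].
rewrite !brD2 !brZ2; apply: VD; last by case: (key _ Hh) => ? _; apply: VH.
by apply: VD; apply: VZ; rewrite br1_bv; apply: VZ; [exact: Vo|exact: V1].
Qed.

Lemma Vh_br h y : H h -> V y -> V (bracket h y).
Proof.
move=> Hh; case=> a [b [h' [Hh' ->]]].
rewrite !brD2 !brZ2; apply: VD; last by apply: VH; apply: HB.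
apply: VD; apply: VZ; rewrite br_anti.
  by apply: VN; case: (key _ Hh).
by apply: VN; case: (key _ Hh) => ? _; apply: VH.
Qed.

Lemma mainV : lie_subalgebra V.
Proof.
split.
- exact: V0.
- exact: VD.
- exact: VZ.
move=> x y; case=> a [b [h [Hh ->]]] Vy.
rewrite !brD1 !brZ1; apply: VD; last exact: Vh_br.
by apply: VD; apply: VZ; [apply: Vo_br|apply: V1_br].
Qed.
End Main.

Theorem lemma5p4 (m : nat) (hm : (2 <= m)%N) :
  lie_subalgebra (fun x : LQ =>
    exists (a b : rat) (h : LQ),
      h_gen m h /\ x = a *: bv None + b *: bv (Some Leaf) + h).
Proof. exact: (mainV m). Qed.
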